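(* Let $\mathbb{V}$ be a BIT speciale variety, $A$ a $\mathbb{V}$-algebra and $H$ a non-empty subset of $A$. The following conditions are equivalent, and they imply $0\in H$: (i) for every $a\in A$, every $1\le i\le n$ and all $h_1,\dots,h_n,h'_1,\dots,h'_n\in H$, one has $\alpha_i(\theta(h_1,\dots,h_n,a),\theta(h'_1,\dots,h'_n,a))\in H$; (ii) for every $a\in A$ the $\sim_H$-equivalence class of $a$ equals $\theta(H,\dots,H,a)$, and moreover, for all $a,b\in A$ with $a\sim_H b$, one has $\alpha_i(a,b)\in H$ for every $1\le i\le n$.
   Context: BIT speciale: the algebraic theory of $\mathbb{V}$ contains a constant $0$ and, for some $n\ge1$, binary terms $\alpha_1,\dots,\alpha_n$ and an $(n+1)$-ary term $\theta$ such that $\alpha_i(x,x)=0$ ($1\le i\le n$) and $\theta(\alpha_1(x,y),\dots,\alpha_n(x,y),y)=x$ are identities of $\mathbb{V}$. Notation: $\theta(H,\dots,H,a)=\{\theta(h_1,\dots,h_n,a)\mid h_1,\dots,h_n\in H\}$. For $a,b\in A$, $a\sim_H b$ iff $\theta(H,\dots,H,a)=\theta(H,\dots,H,b)$. *)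

(* Defs.v *)
From mathcomp Require Import all_boot.
Set Implicit Arguments. Unset Strict Implicit. Unset Printing Implicit Defensive.

(* A BIT speciale signature on a carrier A: constant 0, binary terms
   alpha_1..alpha_n (indexed by 'I_n) and an (n+1)-ary term theta, whose
   first n arguments are given as a function 'I_n -> A. *)
Definition bit_speciale (n : nat) (A : Type) (zero : A)
  (alpha : 'I_n -> A -> A -> A) (theta : ('I_n -> A) -> A -> A) : Prop :=
  (forall i x, alpha i x x = zero) /\
  (forall x y, theta (fun i => alpha i x y) y = x).

Definition thetaH (n : nat) (A : Type) (theta : ('I_n -> A) -> A -> A)
  (H : A -> Prop) (a : A) : A -> Prop :=
  fun x => exists hs : 'I_n -> A, (forall i, H (hs i)) /\ x = theta hs a.

Definition simH (n : nat) (A : Type) (theta : ('I_n -> A) -> A -> A)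
  (H : A -> Prop) (a b : A) : Prop :=
  forall x, thetaH theta H a x <-> thetaH theta H b x.

(* Main.v *)
Require Import Defs.
From mathcomp Require Import all_boot.

Theorem lemma2p4 (n : nat) (A : Type) (zero : A)
  (alpha : 'I_n -> A -> A -> A) (theta : ('I_n -> A) -> A -> A)
  (Hn : 1 <= n) (HV : bit_speciale zero alpha theta)
  (H : A -> Prop) (Hne : exists h, H h) :
  let cond_i :=
    forall (a : A) (i : 'I_n) (hs hs' : 'I_n -> A),
      (forall j, H (hs j)) -> (forall j, H (hs' j)) ->
      H (alpha i (theta hs a) (theta hs' a)) in
  let cond_ii :=
    (forall a b : A, simH theta H a b <-> thetaH theta H a b) /\
    (forall a b : A, simH theta H a b -> forall i : 'I_n, H (alpha i a b)) in
  (cond_i <-> cond_ii) /\ (cond_i -> H zero).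
Proof.
  destruct HV as [Ha0 Hth].
  move=> ci cii.
  have Z : ci -> H zero.
    move=> C; case: Hne => h Hh.
    have := C h (Ordinal Hn) (fun _ => h) (fun _ => h) (fun _ => Hh) (fun _ => Hh).
    by rewrite Ha0.
  split; last exact: Z.
  split.
  - move=> C; have H0 := Z C.
    have self : forall a, thetaH theta H a a.
      move=> a; exists (fun i => alpha i a a); split; last by rewrite Hth.
      by move=> i; rewrite Ha0.
    have L : forall a b, thetaH theta H a b -> forall x, thetaH theta H a x -> thetaH theta H b x.
      move=> a b [hs [Hhs ->]] x [ks [Hks ->]].
      exists (fun i => alpha i (theta ks a) (theta hs a)); split; last by rewrite Hth.
      by move=> i; apply: C.
    have M : forall a b, thetaH theta H a b -> thetaH theta H b a.
      move=> a b [hs [Hhs ->]].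
      exists (fun i => alpha i a (theta hs a)); split; last by rewrite Hth.
      move=> i; have := C a i (fun j => alpha j a a) hs (fun j => eq_ind_r H H0 (Ha0 j a)) Hhs.
      by rewrite Hth.
    split.
    + move=> a b; split.
      * move=> S; apply/S; exact: self.
      * move=> T x; split; [exact: L | exact: L _ _ (M _ _ T) x].
    + move=> a b S i.
      have [hs [Hhs Ea]] : thetaH theta H b a by apply/S; exact: self.
      have Eb : b = theta (fun j => alpha j b b) b by rewrite Hth.
      rewrite {1}Ea {2}Eb; apply: C => // j; rewrite Ha0; exact: H0.
  - move=> [P1 P2] a i hs hs' Hhs Hhs'.
    apply: P2.
    have S1 : simH theta H a (theta hs a) by apply/P1; exists hs.
    have S2 : simH theta H a (theta hs' a) by apply/P1; exists hs'.
    move=> x; split => X; [apply/S2; apply/S1 | apply/S1; apply/S2]; exact: X.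
Qed.
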